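(* Let $A$ (in $\mathcal H$) and $B$ (in $\mathcal K$) be closed densely defined operators with $A\dashv B$, with bounded intertwining operator $T$. Then: (i) $\sigma_p(A)\subseteq\sigma_p(B)$ and for every $\lambda\in\sigma_p(A)$, $m_A(\lambda)\le m_B(\lambda)$, where $m_A(\lambda)$ denotes the multiplicity (dimension of the eigenspace) of $\lambda$ as an eigenvalue of $A$; (ii) $\sigma_r(B)\subseteq\sigma_r(A)$; (iii) if $TD(A)=D(B)$, then $\sigma_p(B)=\sigma_p(A)$; (iv) if $T^{-1}$ is bounded (on its domain $R(T)$) and $TD(A)$ is a core for $B$, then $\sigma_p(B)\subseteq\sigma(A)$.
   Context: A bounded operator $T:\mathcal H\to\mathcal K$ is a bounded intertwining operator for $A$ and $B$ if $T D(A)\subseteq D(B)$ and $BT\xi=TA\xi$ for all $\xi\in D(A)$. $A$ is quasi-similar to $B$, written $A\dashv B$, if there is a bounded intertwining operator $T$ for $A$ and $B$ that is injective and whose inverse $T^{-1}$ (defined on $R(T)$) is densely defined, but not necessarily bounded. Spectral notions: $\rho(A)$ = set of $\lambda$ with $A-\lambda I$ injective and $(A-\lambda I)^{-1}$ bounded everywhere defined; $\sigma(A)=\mathbb C\setminus \rho(A)$; $\sigma_p(A)$ = eigenvalues; $\sigma_r(A)$ = set of $\lambda$ with $A-\lambda I$ injective and non-dense range. *)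

(* Defs.v *)
From Stdlib Require Import Reals.
Open Scope R_scope.

Record Cplx := mkC { Re : R ; Im : R }.
Definition C0 : Cplx := mkC 0 0.
Definition C1 : Cplx := mkC 1 0.
Definition Cadd (a b : Cplx) : Cplx := mkC (Re a + Re b) (Im a + Im b).
Definition Cmul (a b : Cplx) : Cplx :=
  mkC (Re a * Re b - Im a * Im b) (Re a * Im b + Im a * Re b).
Definition Cconj (a : Cplx) : Cplx := mkC (Re a) (- Im a).

Record Hilbert := {
  hcar :> Type;
  hzero : hcar;
  hadd : hcar -> hcar -> hcar;
  hopp : hcar -> hcar;
  hscal : Cplx -> hcar -> hcar;
  hinner : hcar -> hcar -> Cplx;
  hadd_assoc : forall x y z, hadd x (hadd y z) = hadd (hadd x y) z;
  hadd_comm : forall x y, hadd x y = hadd y x;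
  hadd_0 : forall x, hadd x hzero = x;
  hadd_opp : forall x, hadd x (hopp x) = hzero;
  hscal_1 : forall x, hscal C1 x = x;
  hscal_assoc : forall a b x, hscal a (hscal b x) = hscal (Cmul a b) x;
  hscal_distr_v : forall a x y, hscal a (hadd x y) = hadd (hscal a x) (hscal a y);
  hscal_distr_s : forall a b x, hscal (Cadd a b) x = hadd (hscal a x) (hscal b x);
  hinner_add_l : forall x y z, hinner (hadd x y) z = Cadd (hinner x z) (hinner y z);
  hinner_scal_l : forall a x y, hinner (hscal a x) y = Cmul a (hinner x y);
  hinner_conj : forall x y, hinner y x = Cconj (hinner x y);
  hinner_pos : forall x, 0 <= Re (hinner x x);
  hinner_def : forall x, hinner x x = C0 -> x = hzero;
  hcomplete : forall u : nat -> hcar,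
    (forall eps, eps > 0 -> exists N, forall m n, (N <= m)%nat -> (N <= n)%nat ->
        sqrt (Re (hinner (hadd (u m) (hopp (u n))) (hadd (u m) (hopp (u n))))) < eps) ->
    exists l, forall eps, eps > 0 -> exists N, forall n, (N <= n)%nat ->
        sqrt (Re (hinner (hadd (u n) (hopp l)) (hadd (u n) (hopp l)))) < eps
}.

Arguments hzero {h}.
Arguments hadd {h}.
Arguments hopp {h}.
Arguments hscal {h}.
Arguments hinner {h}.

Definition hsub {H : Hilbert} (x y : H) : H := hadd x (hopp y).
Definition norm {H : Hilbert} (x : H) : R := sqrt (Re (hinner x x)).

Definition converges {H : Hilbert} (u : nat -> H) (l : H) : Prop :=
  forall eps, eps > 0 -> exists N, forall n, (N <= n)%nat -> norm (hsub (u n) l) < eps.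

Definition dense {H : Hilbert} (S : H -> Prop) : Prop :=
  forall x eps, eps > 0 -> exists y, S y /\ norm (hsub x y) < eps.

Definition subspace {H : Hilbert} (S : H -> Prop) : Prop :=
  S hzero /\ (forall x y, S x -> S y -> S (hadd x y)) /\
  (forall a x, S x -> S (hscal a x)).

Record Op (H K : Hilbert) := {
  dom : H -> Prop;
  app : H -> K;
  dom_subspace : subspace dom;
  app_add : forall x y, dom x -> dom y -> app (hadd x y) = hadd (app x) (app y);
  app_scal : forall a x, dom x -> app (hscal a x) = hscal a (app x)
}.
Arguments dom {H K}.
Arguments app {H K}.

Definition densely_defined {H K : Hilbert} (A : Op H K) : Prop := dense (dom A).

Definition closed_op {H K : Hilbert} (A : Op H K) : Prop :=
  forall (u : nat -> H) (x : H) (y : K),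
    (forall n, dom A (u n)) -> converges u x -> converges (fun n => app A (u n)) y ->
    dom A x /\ app A x = y.

Definition bounded_op {H K : Hilbert} (T : H -> K) : Prop :=
  (forall x y, T (hadd x y) = hadd (T x) (T y)) /\
  (forall a x, T (hscal a x) = hscal a (T x)) /\
  exists M, forall x, norm (T x) <= M * norm x.

Definition intertwining {H K : Hilbert} (T : H -> K) (A : Op H H) (B : Op K K) : Prop :=
  bounded_op T /\
  forall x, dom A x -> dom B (T x) /\ app B (T x) = T (app A x).

Definition range {H K : Hilbert} (T : H -> K) (y : K) : Prop := exists x, y = T x.

(** T realises the quasi-similarity A ⊣ B: bounded intertwining, injective,
    and T^{-1} (defined on R(T)) densely defined, i.e. R(T) dense. *)
Definition quasi_similar_via {H K : Hilbert} (T : H -> K) (A : Op H H) (B : Op K K) : Prop :=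
  intertwining T A B /\ (forall x y, T x = T y -> x = y) /\ dense (range T).

Definition quasi_similar {H K : Hilbert} (A : Op H H) (B : Op K K) : Prop :=
  exists T, quasi_similar_via T A B.

Definition shift {H : Hilbert} (A : Op H H) (l : Cplx) (x : H) : H :=
  hsub (app A x) (hscal l x).

Definition resolvent_set {H : Hilbert} (A : Op H H) (l : Cplx) : Prop :=
  (forall x y, dom A x -> dom A y -> shift A l x = shift A l y -> x = y) /\
  (forall y, exists x, dom A x /\ shift A l x = y) /\
  (exists M, forall x, dom A x -> norm x <= M * norm (shift A l x)).

Definition spectrum {H : Hilbert} (A : Op H H) (l : Cplx) : Prop :=
  ~ resolvent_set A l.

Definition point_spectrum {H : Hilbert} (A : Op H H) (l : Cplx) : Prop :=
  exists x, dom A x /\ x <> hzero /\ app A x = hscal l x.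

Definition residual_spectrum {H : Hilbert} (A : Op H H) (l : Cplx) : Prop :=
  (forall x y, dom A x -> dom A y -> shift A l x = shift A l y -> x = y) /\
  ~ dense (fun y => exists x, dom A x /\ y = shift A l x).

Definition eigenspace {H : Hilbert} (A : Op H H) (l : Cplx) (x : H) : Prop :=
  dom A x /\ app A x = hscal l x.

(** * Hilbert dimension of a (closed) subspace: cardinality of an
      orthonormal basis; cardinals compared via injections. *)
Inductive span {H : Hilbert} (S : H -> Prop) : H -> Prop :=
| span_zero : span S hzero
| span_gen : forall x, S x -> span S x
| span_add : forall x y, span S x -> span S y -> span S (hadd x y)
| span_scal : forall a x, span S x -> span S (hscal a x).

Definition orthonormal {H : Hilbert} (S : H -> Prop) : Prop :=
  (forall x, S x -> hinner x x = C1) /\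
  (forall x y, S x -> S y -> x <> y -> hinner x y = C0).

Definition orthonormal_basis {H : Hilbert} (V S : H -> Prop) : Prop :=
  (forall x, S x -> V x) /\ orthonormal S /\
  (forall x, V x -> forall eps, eps > 0 -> exists y, span S y /\ norm (hsub x y) < eps).

Definition dim_le {H K : Hilbert} (V : H -> Prop) (W : K -> Prop) : Prop :=
  exists (SV : H -> Prop) (SW : K -> Prop),
    orthonormal_basis V SV /\ orthonormal_basis W SW /\
    exists f : {x : H | SV x} -> {y : K | SW y},
      forall a b, f a = f b -> a = b.

Definition multiplicity_le {H K : Hilbert} (A : Op H H) (B : Op K K) (l : Cplx) : Prop :=
  dim_le (eigenspace A l) (eigenspace B l).

Definition image {H K : Hilbert} (T : H -> K) (D : H -> Prop) (y : K) : Prop :=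
  exists x, D x /\ y = T x.

Definition core {K : Hilbert} (D : K -> Prop) (B : Op K K) : Prop :=
  (forall y, D y -> dom B y) /\
  (forall y, dom B y -> forall eps, eps > 0 ->
     exists z, D z /\ norm (hsub z y) < eps /\ norm (hsub (app B z) (app B y)) < eps).

(* Main.v *)
Require Import Defs.
From Stdlib Require Import Reals.
Open Scope R_scope.
From Stdlib Require Import Lra Lia Psatz Arith List Classical ClassicalEpsilon Cantor.
Import ListNotations.
Import Defs.

Lemma Ceq (a b : Cplx) : Re a = Re b -> Im a = Im b -> a = b.
Proof. destruct a, b; simpl; intros; subst; reflexivity. Qed.

Definition Cabs2 (a : Cplx) := Re a * Re a + Im a * Im a.
Definition Cabs (a : Cplx) := sqrt (Cabs2 a).
Lemma Cabs2_ge0 a : 0 <= Cabs2 a. Proof. unfold Cabs2; nra. Qed.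
Lemma Cabs_ge0 a : 0 <= Cabs a. Proof. apply sqrt_pos. Qed.
Definition Cr (r : R) := mkC r 0.
Definition Cm1 := mkC (-1) 0.

Arguments hadd_assoc {h}. Arguments hadd_comm {h}. Arguments hadd_0 {h}. Arguments hadd_opp {h}.
Arguments hscal_1 {h}. Arguments hscal_assoc {h}. Arguments hscal_distr_v {h}. Arguments hscal_distr_s {h}.
Arguments hinner_add_l {h}. Arguments hinner_scal_l {h}. Arguments hinner_conj {h}. Arguments hinner_pos {h}.
Arguments hinner_def {h}.
Section HS.
Variable H : Hilbert.
Implicit Types x y z : H.

Lemma hadd_0l x : hadd hzero x = x.
Proof. rewrite hadd_comm; apply hadd_0. Qed.

Lemma hadd_cancel x y z : hadd x y = hadd x z -> y = z.
Proof.
  intro E. assert (E2 : hadd (hopp x) (hadd x y) = hadd (hopp x) (hadd x z)) by (rewrite E; reflexivity).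
  rewrite !hadd_assoc in E2. rewrite (hadd_comm (hopp x) x), hadd_opp, !hadd_0l in E2. exact E2.
Qed.

Lemma hscal_C0 x : hscal C0 x = hzero.
Proof.
  apply (hadd_cancel (hscal C0 x)). rewrite hadd_0, <- hscal_distr_s.
  f_equal. apply Ceq; simpl; lra.
Qed.

Lemma hopp_scal x : hopp x = hscal Cm1 x.
Proof.
  apply (hadd_cancel x). rewrite hadd_opp. rewrite <- (hscal_1 x) at 1.
  rewrite <- hscal_distr_s. rewrite <- (hscal_C0 x). f_equal. apply Ceq; simpl; lra.
Qed.

Lemma hscal_zero a : hscal a (@hzero H) = hzero.
Proof. rewrite <- (hscal_C0 hzero), hscal_assoc. f_equal. apply Ceq; simpl; lra. Qed.

Lemma hsub_eq0 x y : hsub x y = hzero -> x = y.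
Proof.
  unfold hsub; intro E. apply (hadd_cancel (hopp y)). rewrite hadd_comm, E, hadd_comm, hadd_opp. reflexivity.
Qed.

Lemma hsub_diag x : hsub x x = hzero. Proof. apply hadd_opp. Qed.

Lemma inner_conj_conj a : Cconj (Cconj a) = a.
Proof. apply Ceq; simpl; lra. Qed.

Lemma hinner_add_r x y z : hinner x (hadd y z) = Cadd (hinner x y) (hinner x z).
Proof.
  rewrite hinner_conj, hinner_add_l, (hinner_conj y x), (hinner_conj z x).
  apply Ceq; simpl; lra.
Qed.

Lemma hinner_scal_r a x y : hinner x (hscal a y) = Cmul (Cconj a) (hinner x y).
Proof.
  rewrite hinner_conj, hinner_scal_l, (hinner_conj y x). apply Ceq; simpl; lra.
Qed.

Lemma hinner_0l y : hinner hzero y = C0.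
Proof. rewrite <- (hscal_C0 hzero), hinner_scal_l. apply Ceq; simpl; lra. Qed.
Lemma hinner_0r y : hinner y hzero = C0.
Proof. rewrite hinner_conj, hinner_0l. apply Ceq; simpl; lra. Qed.

Lemma hinner_self_im x : Im (hinner x x) = 0.
Proof. pose proof (hinner_conj x x) as E. apply (f_equal Im) in E. simpl in E. lra. Qed.

Lemma norm_ge0 x : 0 <= norm x. Proof. apply sqrt_pos. Qed.
Lemma norm_sq x : norm x * norm x = Re (hinner x x).
Proof. unfold norm. apply sqrt_sqrt, hinner_pos. Qed.

Lemma norm_eq0 x : norm x = 0 -> x = hzero.
Proof.
  intro E. apply hinner_def. pose proof (norm_sq x) as S. rewrite E in S.
  apply Ceq; simpl. lra. apply hinner_self_im.
Qed.

Lemma norm_zero : norm (@hzero H) = 0.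
Proof. unfold norm. rewrite hinner_0l. simpl. apply sqrt_0. Qed.

Lemma inner_expand x y a :
  Re (hinner (hadd x (hscal a y)) (hadd x (hscal a y))) =
  Re (hinner x x) + 2 * (Re a * Re (hinner y x) - Im a * Im (hinner y x)) + Cabs2 a * Re (hinner y y).
Proof.
  rewrite hinner_add_l, !hinner_add_r, !hinner_scal_l, !hinner_scal_r.
  rewrite (hinner_conj y x). pose proof (hinner_self_im y). unfold Cabs2. simpl. nra.
Qed.

Lemma cauchy_schwarz x y : Cabs2 (hinner x y) <= Re (hinner x x) * Re (hinner y y).
Proof.
  destruct (Req_dec (Re (hinner y y)) 0) as [Hy|Hy].
  - assert (y = hzero) by (apply norm_eq0; unfold norm; rewrite Hy; apply sqrt_0).
    subst. rewrite hinner_0r. unfold Cabs2; simpl. rewrite hinner_0l; simpl. lra.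
  - pose proof (hinner_pos y) as Py. set (Y := Re (hinner y y)) in *.
    set (p := Re (hinner x y)). set (q := Im (hinner x y)).
    pose proof (inner_expand x y (mkC (- p / Y) (- q / Y))) as E.
    pose proof (hinner_pos (hadd x (hscal (mkC (- p / Y) (- q / Y)) y))) as P.
    rewrite E in P. clear E. rewrite (hinner_conj x y) in P. unfold Cabs2 in *. simpl in P.
    fold p q Y in P. fold p q.
    assert (0 < Y) by lra.
    assert (E1 : (- p / Y * p - - q / Y * - q) = - (p*p+q*q)/Y) by (field; lra).
    assert (E2 : (- p / Y * (- p / Y) + - q / Y * (- q / Y)) * Y = (p*p+q*q)/Y) by (field; lra).
    rewrite E1, E2 in P.
    assert (E3 : 0 <= Re (hinner x x) - (p*p+q*q)/Y) by lra.
    apply Rmult_le_compat_r with (r := Y) in E3; [|lra].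
    replace ((Re (hinner x x) - (p * p + q * q) / Y) * Y) with (Re (hinner x x) * Y - (p*p+q*q)) in E3 by (field; lra).
    lra.
Qed.

Lemma abs_inner_le x y : Cabs (hinner x y) <= norm x * norm y.
Proof.
  unfold Cabs, norm. rewrite <- sqrt_mult by apply hinner_pos.
  apply sqrt_le_1_alt. apply cauchy_schwarz.
Qed.

Lemma re_inner_le x y : Re (hinner x y) <= norm x * norm y.
Proof.
  eapply Rle_trans; [|apply abs_inner_le]. unfold Cabs, Cabs2.
  destruct (Rle_dec (Re (hinner x y)) 0). { pose proof (sqrt_pos (Re (hinner x y) * Re (hinner x y) + Im (hinner x y) * Im (hinner x y))). lra. }
  rewrite <- (sqrt_square (Re (hinner x y))) at 1 by lra.
  apply sqrt_le_1_alt. nra.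
Qed.

Lemma norm_triangle x y : norm (hadd x y) <= norm x + norm y.
Proof.
  pose proof (norm_ge0 x). pose proof (norm_ge0 y). pose proof (norm_ge0 (hadd x y)).
  apply Rsqr_incr_0_var; [|lra]. unfold Rsqr. rewrite norm_sq.
  rewrite hinner_add_l, !hinner_add_r. simpl.
  rewrite (hinner_conj x y). simpl. pose proof (re_inner_le x y).
  rewrite <- (norm_sq x), <- (norm_sq y). nra.
Qed.

Lemma norm_scal a x : norm (hscal a x) = Cabs a * norm x.
Proof.
  unfold norm, Cabs. rewrite <- sqrt_mult by (apply Cabs2_ge0 || apply hinner_pos).
  f_equal. rewrite hinner_scal_l, hinner_scal_r. pose proof (hinner_self_im x). unfold Cabs2; simpl. nra.
Qed.

Lemma Cabs_m1 : Cabs Cm1 = 1.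
Proof. unfold Cabs, Cabs2; simpl. replace (-1 * -1 + 0 * 0) with 1 by lra. apply sqrt_1. Qed.

Lemma norm_opp x : norm (hopp x) = norm x.
Proof. rewrite hopp_scal, norm_scal, Cabs_m1. lra. Qed.

Lemma hopp_add x y : hopp (hadd x y) = hadd (hopp x) (hopp y).
Proof. rewrite !hopp_scal. apply hscal_distr_v. Qed.
Lemma hopp_opp x : hopp (hopp x) = x.
Proof. rewrite !hopp_scal, hscal_assoc. rewrite <- (hscal_1 x) at 2. f_equal. apply Ceq; simpl; lra. Qed.

Lemma hsub_sym_norm x y : norm (hsub x y) = norm (hsub y x).
Proof.
  rewrite <- norm_opp. unfold hsub. rewrite hopp_add, hopp_opp, hadd_comm. reflexivity.
Qed.

Lemma hsub_split x y z : hsub x z = hadd (hsub x y) (hsub y z).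
Proof.
  unfold hsub. rewrite <- hadd_assoc, (hadd_assoc (hopp y)), (hadd_comm (hopp y) y), hadd_opp, hadd_0l. reflexivity.
Qed.

Lemma norm_sub_triangle x y z : norm (hsub x z) <= norm (hsub x y) + norm (hsub y z).
Proof. rewrite (hsub_split x y z). apply norm_triangle. Qed.

End HS.

Section Lin.
Variables H K : Hilbert.

Lemma lin_zero (T : H -> K) : (forall a x, T (hscal a x) = hscal a (T x)) -> T hzero = hzero.
Proof. intro L. rewrite <- (hscal_C0 H hzero), L, hscal_C0. reflexivity. Qed.

Lemma lin_opp (T : H -> K) : (forall a x, T (hscal a x) = hscal a (T x)) -> forall x, T (hopp x) = hopp (T x).
Proof. intros L x. rewrite !hopp_scal, L. reflexivity. Qed.

Lemma lin_sub (T : H -> K) : (forall x y, T (hadd x y) = hadd (T x) (T y)) ->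
  (forall a x, T (hscal a x) = hscal a (T x)) -> forall x y, T (hsub x y) = hsub (T x) (T y).
Proof. intros A L x y. unfold hsub. rewrite A, lin_opp by exact L. reflexivity. Qed.

Lemma bounded_nonneg (T : H -> K) : (exists M, forall x, norm (T x) <= M * norm x) ->
  exists M, 0 <= M /\ forall x, norm (T x) <= M * norm x.
Proof.
  intros [M HM]. exists (Rmax M 0). split. apply Rmax_r. intro x. eapply Rle_trans. apply HM.
  apply Rmult_le_compat_r. apply norm_ge0. apply Rmax_l.
Qed.
End Lin.

Lemma dom_add {H K} (A : Op H K) x y : dom A x -> dom A y -> dom A (hadd x y).
Proof. intros. destruct (dom_subspace _ _ A) as [_ [P _]]. auto. Qed.
Lemma dom_scal {H K} (A : Op H K) a x : dom A x -> dom A (hscal a x).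
Proof. intros. destruct (dom_subspace _ _ A) as [_ [_ P]]. auto. Qed.
Lemma dom_zero {H K} (A : Op H K) : dom A hzero.
Proof. destruct (dom_subspace _ _ A) as [P _]. auto. Qed.
Lemma dom_sub {H K} (A : Op H K) x y : dom A x -> dom A y -> dom A (hsub x y).
Proof. intros. unfold hsub. apply dom_add; auto. rewrite hopp_scal. apply dom_scal; auto. Qed.
Lemma app_sub {H K} (A : Op H K) x y : dom A x -> dom A y -> app A (hsub x y) = hsub (app A x) (app A y).
Proof.
  intros. unfold hsub. rewrite app_add; auto. rewrite !hopp_scal, app_scal; auto.
  rewrite hopp_scal. apply dom_scal; auto.
Qed.

Section Main.
Variables H K : Hilbert.
Variables (A : Op H H) (B : Op K K) (T : H -> K).
Hypothesis hT : quasi_similar_via T A B.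

Let Tadd : forall x y, T (hadd x y) = hadd (T x) (T y).
Proof. destruct hT as [[[? _] _] _]. auto. Qed.
Let Tscal : forall a x, T (hscal a x) = hscal a (T x).
Proof. destruct hT as [[[_ [? _]] _] _]. auto. Qed.
Let Tinj : forall x y, T x = T y -> x = y.
Proof. destruct hT as [_ [? _]]. auto. Qed.
Let Tint : forall x, dom A x -> dom B (T x) /\ app B (T x) = T (app A x).
Proof. destruct hT as [[_ ?] _]. auto. Qed.

Lemma T_shift l x : dom A x -> shift B l (T x) = T (shift A l x).
Proof.
  intro D. unfold shift. rewrite (lin_sub _ _ T Tadd Tscal), Tscal. f_equal. apply Tint, D.
Qed.

Lemma T_zero : T hzero = hzero. Proof. apply lin_zero, Tscal. Qed.

Lemma part_i_point l : point_spectrum A l -> point_spectrum B l.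
Proof.
  intros [x [D [NZ E]]]. exists (T x). split. apply Tint, D. split.
  - intro Z. apply NZ, Tinj. rewrite Z, T_zero. reflexivity.
  - destruct (Tint x D) as [_ E2]. rewrite E2, E, Tscal. reflexivity.
Qed.

Lemma part_ii l : residual_spectrum B l -> residual_spectrum A l.
Proof.
  intros [Binj Bnd]. split.
  - intros x y Dx Dy E. apply Tinj. apply Binj; try apply Tint; auto.
    rewrite !T_shift by auto. rewrite E. reflexivity.
  - intro Dn. apply Bnd. intros y eps Heps.
    destruct hT as [[[_ [_ Tb]] _] [_ Tdense]].
    destruct (bounded_nonneg _ _ T Tb) as [M [M0 HM]].
    destruct (Tdense y (eps/2)) as [y0 [[x0 ->] Hy0]]; [lra|].
    destruct (Dn x0 (eps / 2 / (M + 1))) as [z [[x [Dx ->]] Hz]].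
    { apply Rdiv_lt_0_compat; lra. }
    exists (T (shift A l x)). split.
    + exists (T x). split. apply Tint, Dx. rewrite T_shift; auto.
    + eapply Rle_lt_trans. apply norm_sub_triangle with (y := T x0).
      rewrite <- (lin_sub _ _ T Tadd Tscal).
      pose proof (HM (hsub x0 (shift A l x))).
      assert (M * norm (hsub x0 (shift A l x)) <= M * (eps/2/(M+1))) by (apply Rmult_le_compat_l; lra).
      assert (M * (eps / 2 / (M + 1)) < eps/2).
      { apply Rmult_lt_reg_r with (r := M+1). lra.
        replace (M * (eps / 2 / (M + 1)) * (M + 1)) with (M * (eps/2)) by (field; lra). nra. }
      lra.
Qed.

Lemma part_iii : (forall y, image T (dom A) y <-> dom B y) ->
     forall l, point_spectrum B l <-> point_spectrum A l.
Proof.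
  intros Him l. split; [|apply part_i_point].
  intros [y [Dy [NZ E]]]. destruct (proj2 (Him y) Dy) as [x [Dx ->]].
  exists x. split; auto. split.
  - intro Z. apply NZ. rewrite Z. apply T_zero.
  - apply Tinj. rewrite Tscal, <- E. symmetry. apply Tint, Dx.
Qed.

Lemma part_iv : (exists M, forall x, norm x <= M * norm (T x)) ->
     core (image T (dom A)) B ->
     forall l, point_spectrum B l -> spectrum A l.
Proof.
  intros [M2' HM2'] [_ Hcore] l [y [Dy [NZ E]]] [_ [_ [M1' HM1']]].
  destruct hT as [[[_ [_ Tb]] _] _].
  destruct (bounded_nonneg _ _ T Tb) as [M3 [M30 HM3]].
  set (M2 := Rmax M2' 0). set (M1 := Rmax M1' 0).
  assert (HM2 : forall x, norm x <= M2 * norm (T x)).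
  { intro x. eapply Rle_trans. apply HM2'. apply Rmult_le_compat_r. apply norm_ge0. apply Rmax_l. }
  assert (HM1 : forall x, dom A x -> norm x <= M1 * norm (shift A l x)).
  { intros x Dx. eapply Rle_trans. apply HM1'; auto. apply Rmult_le_compat_r. apply norm_ge0. apply Rmax_l. }
  assert (M10 : 0 <= M1) by apply Rmax_r. assert (M20 : 0 <= M2) by apply Rmax_r.
  pose proof (Cabs_ge0 l).
  set (C := 1 + M3 * M1 * M2 * (1 + Cabs l)).
  assert (C1 : 1 <= C). { unfold C. assert (0 <= M3 * M1 * M2 * (1 + Cabs l)). repeat apply Rmult_le_pos; lra. lra. }
  assert (Bd : forall eps, eps > 0 -> norm y <= C * eps).
  { intros eps Heps. destruct (Hcore y Dy eps Heps) as [z [[x [Dx ->]] [H1 H2]]].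
    assert (S1 : norm (shift B l (T x)) <= eps + Cabs l * eps).
    { unfold shift. eapply Rle_trans. apply norm_sub_triangle with (y := app B y).
      rewrite E in H2 |- *. unfold hsub at 2. rewrite hopp_scal, hscal_assoc.
      replace (Cmul Cm1 l) with (Cmul l Cm1) by (apply Ceq; simpl; lra).
      rewrite <- hscal_assoc, <- hscal_distr_v, <- hopp_scal. fold (hsub y (T x)).
      rewrite norm_scal. rewrite (hsub_sym_norm _ y). apply Rplus_le_compat; try lra.
      apply Rmult_le_compat_l; lra. }
    rewrite T_shift in S1 by auto.
    assert (S2 : norm (shift A l x) <= M2 * (eps + Cabs l * eps)).
    { eapply Rle_trans. apply HM2. apply Rmult_le_compat_l; lra. }
    assert (S3 : norm x <= M1 * (M2 * (eps + Cabs l * eps))).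
    { eapply Rle_trans. apply HM1; auto. apply Rmult_le_compat_l; lra. }
    assert (S4 : norm (T x) <= M3 * (M1 * (M2 * (eps + Cabs l * eps)))).
    { eapply Rle_trans. apply HM3. apply Rmult_le_compat_l; lra. }
    assert (Y : norm y <= norm (hsub y (T x)) + norm (hsub (T x) hzero)).
    { replace (norm y) with (norm (hsub y hzero)). apply norm_sub_triangle.
      unfold hsub. rewrite hopp_scal, hscal_zero, hadd_0. reflexivity. }
    replace (hsub (T x) hzero) with (T x) in Y by (unfold hsub; rewrite hopp_scal, hscal_zero, hadd_0; reflexivity).
    rewrite hsub_sym_norm in Y. unfold C. nra. }
  apply NZ, norm_eq0. pose proof (norm_ge0 _ y).
  destruct (Rle_lt_or_eq_dec 0 (norm y)) as [P|P]; auto.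
  pose proof (Bd (norm y / (2 * C))) as B2.
  assert (norm y / (2*C) > 0) by (apply Rdiv_lt_0_compat; lra).
  specialize (B2 H2). replace (C * (norm y / (2 * C))) with (norm y / 2) in B2 by (field; lra). lra.
Qed.
End Main.

Ltac vexp := repeat (rewrite ?hinner_add_l, ?hinner_add_r, ?hinner_scal_l, ?hinner_scal_r, ?hinner_0l, ?hinner_0r).
Ltac vexpH H := repeat (rewrite ?hinner_add_l, ?hinner_add_r, ?hinner_scal_l, ?hinner_scal_r, ?hinner_0l, ?hinner_0r in H).
Ltac vec_eq := apply hsub_eq0; apply hinner_def; unfold hsub; repeat rewrite hopp_scal; vexp;
  unfold Cm1, Cr, C0, Defs.C1 in *; apply Ceq; simpl; field.

Lemma seq_choice {A : Type} (P : nat -> A -> Prop) : (forall n, exists a, P n a) -> exists f, forall n, P n (f n).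
Proof.
  intro E. exists (fun n => proj1_sig (constructive_indefinite_description _ (E n))).
  intro n. exact (proj2_sig (constructive_indefinite_description _ (E n))).
Qed.

Definition closedset {H : Hilbert} (V : H -> Prop) :=
  forall u x, (forall n, V (u n)) -> converges u x -> V x.

Section Geo.
Variable H : Hilbert.
Implicit Types x y z : H.

Lemma sub_in V x y : subspace V -> V x -> V y -> V (hsub x y).
Proof. intros [_ [Ad Sc]] ? ?. unfold hsub. apply Ad; auto. rewrite hopp_scal. auto. Qed.

Lemma span_in (V S : H -> Prop) : subspace V -> (forall x, S x -> V x) -> forall y, span S y -> V y.
Proof.
  intros Sub SV y Sp. destruct Sub as [Z [Ad Sc]]. induction Sp; auto.
Qed.

Lemma span_sub (S : H -> Prop) x y : span S x -> span S y -> span S (hsub x y).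
Proof. intros. unfold hsub. apply span_add; auto. rewrite hopp_scal. apply span_scal; auto. Qed.

Lemma norm_sq_expand x : Re (hinner x x) = norm x * norm x.
Proof. symmetry; apply norm_sq. Qed.

Lemma norm_hsub0 x : hsub x hzero = x.
Proof. vec_eq. Qed.

Lemma max_orth_dense (V S : H -> Prop) : subspace V -> closedset V -> (forall x, S x -> V x) ->
  (forall s, S s -> hinner s s = Defs.C1) ->
  (forall w, V w -> hinner w w = Defs.C1 -> (forall s, S s -> hinner w s = C0) -> False) ->
  forall x, V x -> forall eps, eps > 0 -> exists y, span S y /\ norm (hsub x y) < eps.
Proof.
  intros Sub Cl SV Orth Max x Vx eps Heps. apply NNPP. intro Hn.
  assert (Far : forall y, span S y -> eps <= norm (hsub x y)).
  { intros y Sy. apply Rnot_lt_le. intro L. apply Hn. exists y. auto. }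
  clear Hn.
  set (E := fun r => exists y, span S y /\ r = - norm (hsub x y)).
  assert (Eb : bound E). { exists 0. intros r [y [_ ->]]. pose proof (norm_ge0 _ (hsub x y)). lra. }
  assert (Ene : exists r, E r). { exists (- norm (hsub x hzero)). exists hzero. split; auto. apply span_zero. }
  destruct (completeness E Eb Ene) as [m [Mub Mlub]].
  set (d := - m).
  assert (dle : forall y, span S y -> d <= norm (hsub x y)).
  { intros y Sy. unfold d. assert (E (- norm (hsub x y))) by (exists y; auto). apply Mub in H0. lra. }
  assert (deps : eps <= d).
  { unfold d. assert (m <= - eps). { apply Mlub. intros r [y [Sy ->]]. pose proof (Far y Sy). lra. } lra. }
  assert (dclose : forall delta, delta > 0 -> exists y, span S y /\ norm (hsub x y) < d + delta).
  { intros delta Hd. apply NNPP. intro Hn.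
    assert (m <= m - delta). { apply Mlub. intros r [y [Sy ->]]. apply Rnot_lt_le. intro L.
      apply Hn. exists y. split; auto. unfold d. lra. } lra. }
  destruct (seq_choice (fun n y => span S y /\ norm (hsub x y) < d + / (INR n + 1))) as [yn Hyn].
  { intro n. apply dclose. apply Rinv_0_lt_compat. pose proof (pos_INR n). lra. }
  (* parallelogram bound *)
  assert (Par : forall y y', span S y -> span S y' ->
     norm (hsub y y') * norm (hsub y y') <= 2 * (norm (hsub x y) * norm (hsub x y)) + 2 * (norm (hsub x y') * norm (hsub x y')) - 4 * (d * d)).
  { intros y y' Sy Sy'.
    set (mid := hscal (mkC (/2) 0) (hadd y y')).
    assert (Smid : span S mid) by (apply span_scal, span_add; auto).
    pose proof (dle mid Smid) as Dm.
    assert (Id : Re (hinner (hsub y y') (hsub y y')) + 4 * Re (hinner (hsub x mid) (hsub x mid)) =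
       2 * Re (hinner (hsub x y) (hsub x y)) + 2 * Re (hinner (hsub x y') (hsub x y'))).
    { unfold mid, hsub. repeat rewrite hopp_scal. vexp. unfold Cm1. simpl. field. }
    rewrite !norm_sq_expand in Id. assert (0 <= d) by lra. nra. }
  assert (Cau : forall e, e > 0 -> exists N, forall p q, (N <= p)%nat -> (N <= q)%nat ->
      sqrt (Re (hinner (hadd (yn p) (hopp (yn q))) (hadd (yn p) (hopp (yn q))))) < e).
  { intros e He.
    destruct (archimed_cor1 (e * e / (4 * (2 * d + 1)))) as [N [HN1 HN2]].
    { apply Rdiv_lt_0_compat. nra. lra. }
    exists N. intros p q Hp Hq. fold (hsub (yn p) (yn q)). fold (norm (hsub (yn p) (yn q))).
    destruct (Hyn p) as [Sp Np]. destruct (Hyn q) as [Sq Nq].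
    pose proof (Par _ _ Sp Sq) as Pq. pose proof (dle _ Sp). pose proof (dle _ Sq).
    assert (Ip : / (INR p + 1) <= / INR N).
    { apply Rinv_le_contravar. apply lt_0_INR; lia. apply le_INR in Hp. lra. }
    assert (Iq : / (INR q + 1) <= / INR N).
    { apply Rinv_le_contravar. apply lt_0_INR; lia. apply le_INR in Hq. lra. }
    assert (IN1 : / INR N <= 1). { replace 1 with (/1) by lra. apply Rinv_le_contravar. lra. apply (le_INR 1). lia. }
    set (a := norm (hsub x (yn p))) in *. set (b := norm (hsub x (yn q))) in *.
    set (iN := / INR N) in *.
    assert (a * a - d * d <= (2 * d + 1) * iN).
    { assert (a < d + iN) by lra. assert (0 <= d) by lra. pose proof (Rinv_0_lt_compat (INR N) (lt_0_INR N ltac:(lia))). fold iN in H3. nra. }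
    assert (b * b - d * d <= (2 * d + 1) * iN).
    { assert (b < d + iN) by lra. assert (0 <= d) by lra. pose proof (Rinv_0_lt_compat (INR N) (lt_0_INR N ltac:(lia))). fold iN in H4. nra. }
    assert (Sq2 : norm (hsub (yn p) (yn q)) * norm (hsub (yn p) (yn q)) < e * e).
    { assert ((2*d+1) * iN < e * e / 4).
      { apply Rlt_le_trans with ((2*d+1) * (e * e / (4 * (2 * d + 1)))).
        apply Rmult_lt_compat_l; [lra|exact HN1]. right; field; lra. }
      nra. }
    pose proof (norm_ge0 _ (hsub (yn p) (yn q))). nra. }
  destruct (hcomplete H yn Cau) as [z Hz].
  assert (Conv : converges yn z) by exact Hz.
  assert (Vz : V z). { apply (Cl yn z); auto. intro n. apply (span_in V S Sub SV), Hyn. }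
  set (w := hsub x z).
  assert (Vw : V w) by (apply sub_in; auto).
  assert (wle : norm w <= d).
  { apply Rnot_lt_le. intro L. set (g := norm w - d).
    destruct (Conv (g/2)) as [N1 HN1]. unfold g; lra.
    destruct (archimed_cor1 (g/2)) as [N2 [HN2 HN2']]. unfold g; lra.
    set (n := max N1 N2).
    pose proof (HN1 n (Nat.le_max_l _ _)).
    destruct (Hyn n) as [_ Hn].
    assert (/ (INR n + 1) < g/2).
    { eapply Rle_lt_trans; [|exact HN2]. apply Rinv_le_contravar. apply lt_0_INR; lia.
      pose proof (le_INR _ _ (Nat.le_max_r N1 N2)). fold n in H1. lra. }
    pose proof (norm_sub_triangle _ x (yn n) z). fold w in H2.
    unfold g in *. lra. }
  assert (wge : forall v, span S v -> d <= norm (hsub w v)).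
  { intros v Sv. apply Rnot_lt_le. intro L. set (g := d - norm (hsub w v)).
    destruct (Conv g) as [N1 HN1]. unfold g; lra.
    pose proof (HN1 N1 (le_n _)).
    assert (Sp : span S (hadd (yn N1) v)) by (apply span_add; [apply Hyn | auto]).
    pose proof (dle _ Sp).
    assert (Id : hsub x (hadd (yn N1) v) = hadd (hsub w v) (hsub z (yn N1))).
    { unfold w. vec_eq. }
    rewrite Id in H1. pose proof (norm_triangle _ (hsub w v) (hsub z (yn N1))).
    rewrite (hsub_sym_norm _ z) in H2. unfold g in H0. lra. }
  assert (worth : forall s, S s -> hinner w s = C0).
  { intros s Ss. set (c := hinner w s).
    assert (G := wge (hscal c s) (span_scal _ _ _ (span_gen _ _ Ss))).
    pose proof (norm_ge0 _ w). pose proof (norm_ge0 _ (hsub w (hscal c s))).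
    assert (G2 : norm w * norm w <= norm (hsub w (hscal c s)) * norm (hsub w (hscal c s))) by nra.
    rewrite <- !norm_sq_expand in G2.
    assert (Es : hinner s s = Defs.C1) by auto.
    unfold hsub in G2. rewrite hopp_scal in G2. vexpH G2. rewrite Es in G2.
    rewrite (hinner_conj w s) in G2. fold c in G2. unfold Cm1, Defs.C1 in G2. simpl in G2.
    apply Ceq; simpl; nra. }
  assert (wpos : 0 < norm w).
  { pose proof (wge hzero (span_zero _)). rewrite norm_hsub0 in H0. lra. }
  set (u := hscal (mkC (/ norm w) 0) w).
  apply (Max u).
  - destruct Sub as [_ [_ Sc]]. apply Sc. auto.
  - unfold u. vexp. pose proof (norm_sq _ w). pose proof (hinner_self_im _ w).
    apply Ceq; simpl. rewrite <- H0. field. lra. rewrite H1. lra.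
  - intros s Ss. unfold u. rewrite hinner_scal_l, worth by auto. apply Ceq; simpl; lra.
Qed.
End Geo.

Fixpoint csum (f : nat -> Cplx) (n : nat) : Cplx :=
  match n with O => C0 | S k => Cadd (csum f k) (f k) end.
Fixpoint rsum (f : nat -> R) (n : nat) : R :=
  match n with O => 0 | S k => rsum f k + f k end.
Fixpoint vsum {H : Hilbert} (c : nat -> Cplx) (v : nat -> H) (n : nat) : H :=
  match n with O => hzero | S k => hadd (vsum c v k) (hscal (c k) (v k)) end.

Definition orthofam {H : Hilbert} (e : nat -> H) (m : nat) :=
  forall i j, (i < m)%nat -> (j < m)%nat -> hinner (e i) (e j) = if Nat.eq_dec i j then Defs.C1 else C0.

Section Sums.
Variable H : Hilbert.
Implicit Types x y w : H.

Lemma inner_vsum_l c v n w : hinner (vsum c v n) w = csum (fun i => Cmul (c i) (hinner (v i) w)) n.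
Proof. induction n; simpl. apply hinner_0l. rewrite hinner_add_l, hinner_scal_l, IHn. reflexivity. Qed.

Lemma vsum_span (S : H -> Prop) c v n : (forall i, (i < n)%nat -> S (v i)) -> span S (vsum c v n).
Proof. induction n; simpl; intros. apply span_zero. apply span_add. apply IHn; auto. apply span_scal, span_gen; auto. Qed.

Lemma vsum_in (V : H -> Prop) c v n : subspace V -> (forall i, (i < n)%nat -> V (v i)) -> V (vsum c v n).
Proof. intros [Z [Ad Sc]]. induction n; simpl; intros; auto. apply Ad; auto. Qed.

Lemma inner_vsum_e c (e : nat -> H) m n j : orthofam e m -> (n <= m)%nat -> (j < m)%nat ->
  hinner (vsum c e n) (e j) = if Nat.ltb j n then c j else C0.
Proof.
  intros O. induction n; intros Hn Hj; simpl. apply hinner_0l.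
  rewrite hinner_add_l, hinner_scal_l, IHn by lia. rewrite O by lia.
  destruct (Nat.eq_dec n j); destruct (Nat.ltb j n) eqn:E1; destruct (Nat.ltb j (S n)) eqn:E2;
    apply Nat.ltb_lt in E1 || apply Nat.ltb_ge in E1; apply Nat.ltb_lt in E2 || apply Nat.ltb_ge in E2;
    try lia; subst; apply Ceq; simpl; lra.
Qed.

Lemma norm_vsum_e c (e : nat -> H) m n : orthofam e m -> (n <= m)%nat ->
  Re (hinner (vsum c e n) (vsum c e n)) = rsum (fun i => Cabs2 (c i)) n.
Proof.
  intros O. induction n; intros Hn; simpl. rewrite hinner_0l. reflexivity.
  rewrite inner_expand, IHn by lia. rewrite (hinner_conj (vsum c e n) (e n)).
  rewrite inner_vsum_e with (m := m) by (auto; lia). rewrite Nat.ltb_irrefl.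
  rewrite O by lia. destruct (Nat.eq_dec n n); [|lia]. simpl. ring.
Qed.
End Sums.

Lemma lin_vsum {H K : Hilbert} (T : H -> K) c v n :
  (forall x y, T (hadd x y) = hadd (T x) (T y)) -> (forall a x, T (hscal a x) = hscal a (T x)) ->
  T (vsum c v n) = vsum c (fun i => T (v i)) n.
Proof. intros A L. induction n; simpl. apply lin_zero; auto. rewrite A, L, IHn. reflexivity. Qed.

Lemma rsum_ge {f : nat -> R} d n : (forall i, (i < n)%nat -> d <= f i) -> INR n * d <= rsum f n.
Proof.
  induction n; intros Hf. simpl; lra. cbn [rsum]. rewrite S_INR. specialize (IHn (fun i Hi => Hf i ltac:(lia))).
  specialize (Hf n ltac:(lia)). lra.
Qed.

Lemma rsum_ext (f g : nat -> R) n : (forall i, f i = g i) -> rsum f n = rsum g n.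
Proof. intro E. induction n; simpl; auto. rewrite IHn, E. reflexivity. Qed.

Lemma rsum_nonneg (f : nat -> R) n : (forall i, 0 <= f i) -> 0 <= rsum f n.
Proof. intro P. induction n; simpl. lra. specialize (P n). lra. Qed.

Lemma csum_conj_mul (f : nat -> Cplx) n :
  csum (fun i => Cmul (Cconj (f i)) (f i)) n = mkC (rsum (fun i => Cabs2 (f i)) n) 0.
Proof. induction n; simpl. reflexivity. rewrite IHn. unfold Cabs2. apply Ceq; simpl; ring. Qed.

Lemma bessel_functional {H K : Hilbert} (T : H -> K) (M : R) (b : K) (e : nat -> H) (m : nat) :
  (forall x y, T (hadd x y) = hadd (T x) (T y)) -> (forall a x, T (hscal a x) = hscal a (T x)) ->
  0 <= M -> (forall x, norm (T x) <= M * norm x) -> orthofam e m ->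
  rsum (fun i => Cabs2 (hinner (T (e i)) b)) m <= (M * norm b) * (M * norm b).
Proof.
  intros A L M0 HM O.
  set (phi := fun i => hinner (T (e i)) b).
  set (x := vsum (fun i => Cconj (phi i)) e m).
  set (S := rsum (fun i => Cabs2 (hinner (T (e i)) b)) m).
  assert (E1 : hinner (T x) b = mkC S 0).
  { unfold x. rewrite lin_vsum by auto. rewrite inner_vsum_l. apply csum_conj_mul. }
  assert (E2 : norm x * norm x = S).
  { rewrite norm_sq. unfold x. rewrite norm_vsum_e with (m := m) by (auto; lia).
    unfold S. apply rsum_ext. intro i. unfold Cabs2, phi; simpl. ring. }
  pose proof (abs_inner_le _ (T x) b) as C. rewrite E1 in C.
  assert (S0 : 0 <= S) by (apply rsum_nonneg; intro; apply Cabs2_ge0).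
  assert (CS : Cabs (mkC S 0) = S).
  { unfold Cabs, Cabs2; simpl. replace (S * S + 0 * 0) with (S * S) by ring. apply sqrt_square; auto. }
  rewrite CS in C. pose proof (HM x). pose proof (norm_ge0 _ b). pose proof (norm_ge0 _ x).
  pose proof (norm_ge0 _ (T x)).
  assert (S <= M * norm x * norm b) by nra.
  (* S = nx^2 <= M nx nb  => nx <= M nb *)
  destruct (Req_dec (norm x) 0) as [Z|NZ].
  - rewrite Z in E2. nra.
  - assert (norm x <= M * norm b) by nra. nra.
Qed.

Section Orth.
Variable H : Hilbert.
Lemma orth_span (S : H -> Prop) v : (forall s, S s -> hinner v s = C0) -> forall y, span S y -> hinner v y = C0.
Proof.
  intros O y Sp. induction Sp. apply hinner_0r. auto.
  rewrite hinner_add_r, IHSp1, IHSp2. apply Ceq; simpl; lra.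
  rewrite hinner_scal_r, IHSp. apply Ceq; simpl; lra.
Qed.

Lemma orth_closure_zero (S : H -> Prop) v : (forall s, S s -> hinner v s = C0) ->
  (forall eps, eps > 0 -> exists y, span S y /\ norm (hsub v y) < eps) -> v = hzero.
Proof.
  intros O D. apply norm_eq0. pose proof (norm_ge0 _ v).
  destruct (Rle_lt_or_eq_dec 0 (norm v) H0) as [P|P]; auto.
  destruct (D (norm v / 2)) as [y [Sy Ny]]. lra.
  assert (E : hinner v v = hinner v (hsub v y)).
  { unfold hsub. rewrite hinner_add_r, hopp_scal, hinner_scal_r, (orth_span S v O y Sy). apply Ceq; simpl; lra. }
  pose proof (abs_inner_le _ v (hsub v y)) as C. rewrite <- E in C.
  assert (Cabs (hinner v v) = norm v * norm v).
  { unfold Cabs, Cabs2. rewrite hinner_self_im, <- norm_sq. replace (norm v * norm v * (norm v * norm v) + 0 * 0) with ((norm v * norm v)*(norm v * norm v)) by ring.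
    apply sqrt_square. nra. }
  rewrite H1 in C. nra.
Qed.
End Orth.

Section Eig.
Variable H : Hilbert.
Variable A : Op H H.
Lemma eig_subspace l : subspace (eigenspace A l).
Proof.
  split; [|split].
  - split. apply dom_zero. rewrite <- (hscal_C0 _ hzero) at 1. rewrite app_scal by apply dom_zero.
    rewrite hscal_C0, hscal_zero. reflexivity.
  - intros x y [Dx Ex] [Dy Ey]. split. apply dom_add; auto. rewrite app_add, Ex, Ey by auto.
    symmetry. apply hscal_distr_v.
  - intros a x [Dx Ex]. split. apply dom_scal; auto. rewrite app_scal, Ex by auto.
    rewrite !hscal_assoc. f_equal. apply Ceq; simpl; ring.
Qed.

Lemma eig_closed l : closed_op A -> closedset (eigenspace A l).
Proof.
  intros Cl u x Hu Cu. destruct (Cl u x (hscal l x)) as [D E].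
  - intro n. apply Hu.
  - exact Cu.
  - intros eps Heps. destruct (Cu (eps / (Cabs l + 1))) as [N HN].
    { apply Rdiv_lt_0_compat; auto. pose proof (Cabs_ge0 l). lra. }
    exists N. intros n Hn. destruct (Hu n) as [_ ->].
    replace (hsub (hscal l (u n)) (hscal l x)) with (hscal l (hsub (u n) x)) by vec_eq.
    rewrite norm_scal. specialize (HN n Hn). pose proof (Cabs_ge0 l). pose proof (norm_ge0 _ (hsub (u n) x)).
    apply Rle_lt_trans with ((Cabs l + 1) * norm (hsub (u n) x)). nra.
    replace eps with ((Cabs l + 1) * (eps / (Cabs l + 1))) by (field; lra).
    apply Rmult_lt_compat_l; lra.
  - split; auto.
Qed.
End Eig.

Definition ZornP (T : Type) := forall P : (T -> Prop) -> Prop,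
  (forall F : (T -> Prop) -> Prop, (forall X, F X -> P X) ->
     (forall X Y, F X -> F Y -> (forall t, X t -> Y t) \/ (forall t, Y t -> X t)) ->
     P (fun t => exists X, F X /\ X t)) ->
  exists A, P A /\ forall B, (forall t, A t -> B t) -> P B -> forall t, B t -> A t.

Lemma C1_neq_C0 : Defs.C1 <> C0.
Proof. intro E. apply (f_equal Re) in E. simpl in E. lra. Qed.

Lemma onb_exists (H : Hilbert) (Z : ZornP H) (V : H -> Prop) :
  subspace V -> closedset V -> exists S, orthonormal_basis V S.
Proof.
  intros Sub Cl.
  destruct (Z (fun S => (forall x, S x -> V x) /\ orthonormal S)) as [A [[AV [A1 A2]] Amax]].
  { intros F FP Ftot. split; [|split].
    - intros x [X [FX Xx]]. apply (FP X FX), Xx.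
    - intros x [X [FX Xx]]. apply (FP X FX), Xx.
    - intros x y [X [FX Xx]] [Y [FY Yy]] Nxy. destruct (Ftot X Y FX FY) as [XY|YX].
      + apply (FP Y FY); auto.
      + apply (FP X FX); auto. }
  exists A. split; [exact AV|split; [split; auto|]].
  apply max_orth_dense; auto.
  intros w Vw W1 Worth.
  assert (Aw : A w).
  { apply (Amax (fun x => A x \/ x = w)); [auto| |auto].
    split; [|split].
    - intros x [Ax| ->]; auto.
    - intros x [Ax| ->]; auto.
    - intros x y [Ax| ->] [Ay| ->] Nxy; auto.
      + rewrite hinner_conj, Worth by auto. apply Ceq; simpl; lra.
      + congruence. }
  pose proof (Worth w Aw). rewrite W1 in H0. apply C1_neq_C0, H0.
Qed.

Definition inj_le {T U} (A : T -> Prop) (B : U -> Prop) :=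
  exists f : T -> U, (forall x, A x -> B (f x)) /\ (forall x y, A x -> A y -> f x = f y -> x = y).

Definition finlist {T} (A : T -> Prop) (l : list T) := NoDup l /\ forall x, A x <-> In x l.

Definition ninj {T} (A : T -> Prop) := exists h : nat -> T, (forall i, A (h i)) /\ forall i j, h i = h j -> i = j.

Lemma fun_choice {X Y : Type} (P : X -> Y -> Prop) : (forall x, exists y, P x y) -> exists f, forall x, P x (f x).
Proof.
  intro E. exists (fun x => proj1_sig (constructive_indefinite_description _ (E x))).
  intro x. exact (proj2_sig (constructive_indefinite_description _ (E x))).
Qed.

Lemma inj_le_trans {T U V} (A : T -> Prop) (B : U -> Prop) (C : V -> Prop) : inj_le A B -> inj_le B C -> inj_le A C.
Proof.
  intros [f [f1 f2]] [g [g1 g2]]. exists (fun x => g (f x)). split; auto.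
Qed.

Section Dich.
Variable T : Type.
Variable t0 : T.

Lemma dichotomy (A : T -> Prop) : (exists l, finlist A l) \/ ninj A.
Proof.
  destruct (classic (exists l, (forall x, In x l -> A x) /\ forall x, A x -> In x l)) as [[l [L1 L2]]|NF].
  - left. set (dec := fun x y : T => excluded_middle_informative (x = y)).
    exists (nodup dec l). split. apply NoDup_nodup. intro x. rewrite nodup_In. split; auto.
  - right.
    assert (Step : forall l, exists x, (forall y, In y l -> A y) -> A x /\ ~ In x l).
    { intro l. destruct (classic (forall y, In y l -> A y)) as [Hl|Hl].
      - destruct (classic (exists x, A x /\ ~ In x l)) as [[x Hx]|Hx].
        + exists x; auto.
        + exfalso. apply NF. exists l. split; auto. intros x Ax. apply NNPP. intro N. apply Hx. eauto.
      - exists t0. intro; contradiction. }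
    destruct (fun_choice _ Step) as [pick Hpick].
    set (sq := fix sq n := match n with O => [] | S k => sq k ++ [pick (sq k)] end).
    assert (SA : forall n y, In y (sq n) -> A y).
    { induction n; simpl; intros y Hy. contradiction. apply in_app_or in Hy as [Hy|[Hy|[]]]; auto.
      subst. apply Hpick. auto. }
    assert (Sin : forall i n, (i < n)%nat -> In (pick (sq i)) (sq n)).
    { intros i n. induction n; intro Hi. lia. simpl. apply in_or_app.
      destruct (Nat.eq_dec i n). subst; right; left; reflexivity. left; apply IHn; lia. }
    exists (fun n => pick (sq n)). split.
    + intro i. apply Hpick. apply SA.
    + intros i j E. destruct (Nat.lt_trichotomy i j) as [L|[L|L]]; auto; exfalso.
      * destruct (Hpick (sq j) (SA j)) as [_ N]. apply N. rewrite <- E. apply Sin, L.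
      * destruct (Hpick (sq i) (SA i)) as [_ N]. apply N. rewrite E. apply Sin, L.
Qed.

Lemma finlist_idx (A : T -> Prop) l : finlist A l ->
  exists idx : T -> nat, forall x, A x -> (idx x < length l)%nat /\ nth (idx x) l t0 = x.
Proof.
  intros [ND Hl]. apply (fun_choice (fun x i => A x -> (i < length l)%nat /\ nth i l t0 = x)). intro x. destruct (classic (A x)) as [Ax|Ax].
  - apply Hl, In_nth with (d := t0) in Ax. destruct Ax as [i [Hi E]]. exists i. auto.
  - exists O. intro; contradiction.
Qed.

Lemma finlist_inj_nat (A : T -> Prop) l : finlist A l -> inj_le A (fun _ : nat => True).
Proof.
  intro F. destruct (finlist_idx A l F) as [idx Hidx]. exists idx. split; auto.
  intros x y Ax Ay E. destruct (Hidx x Ax) as [_ Ex]. destruct (Hidx y Ay) as [_ Ey]. congruence.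
Qed.
End Dich.

Lemma countable_union {T} (t0 : T) (A : T -> Prop) (F : nat -> T -> Prop) :
  (forall k, exists l, finlist (F k) l) -> (forall x, A x -> exists k, F k x) ->
  inj_le A (fun _ : nat => True).
Proof.
  intros Fin Cov.
  destruct (fun_choice _ Fin) as [L HL].
  assert (Ix : forall k, exists idx : T -> nat, forall x, F k x -> nth (idx x) (L k) t0 = x).
  { intro k. destruct (finlist_idx T t0 _ _ (HL k)) as [idx Hi]. exists idx. intros. apply Hi; auto. }
  destruct (fun_choice _ Ix) as [idx Hidx].
  assert (Kx : forall x, exists k, A x -> F k x).
  { intro x. destruct (classic (A x)) as [Ax|Ax]. destruct (Cov x Ax) as [k Hk]. exists k; auto. exists O; intro; contradiction. }
  destruct (fun_choice _ Kx) as [kf Hkf].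
  exists (fun x => to_nat (kf x, idx (kf x) x)). split; auto.
  intros x y Ax Ay E. apply (f_equal of_nat) in E. rewrite !cancel_of_to in E. injection E as E1 E2.
  rewrite <- (Hidx (kf x) x (Hkf x Ax)), <- (Hidx (kf y) y (Hkf y Ay)). rewrite E1, E2 in *. reflexivity.
Qed.

Section Absorb.
Local Opaque to_nat.
Variable T : Type.
Variable Z : ZornP ((T * nat) * T).
Variable A : T -> Prop.
Hypothesis hN : ninj A.

Definition Dom (G : (T * nat) * T -> Prop) x := exists y, G ((x, O), y).
Definition good (G : (T * nat) * T -> Prop) :=
  (forall x n y, G ((x, n), y) -> A x /\ Dom G y /\ Dom G x) /\
  (forall p y y', G (p, y) -> G (p, y') -> y = y') /\
  (forall p p' y, G (p, y) -> G (p', y) -> p = p') /\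
  (forall x n, Dom G x -> exists y, G ((x, n), y)).

Lemma absorb : inj_le (fun p : T * nat => A (fst p)) A.
Proof.
  destruct hN as [h [hA hI]].
  destruct (Z good) as [G [[G1 [G2 [G3 G4]]] Gmax]].
  { intros F FP Ftot.
    assert (Sub : forall X t, F X -> X t -> exists Y, F Y /\ Y t) by eauto.
    split; [|split; [|split]].
    - intros x n y [X [FX Xt]]. destruct (FP X FX) as [X1 _].
      destruct (X1 x n y Xt) as [Ax [[z Dy] [z' Dx]]]. split; auto. split; [exists z|exists z']; eauto.
    - intros p y y' [X [FX Xt]] [Y [FY Yt]]. destruct (Ftot X Y FX FY) as [XY|YX].
      + destruct (FP Y FY) as [_ [Y2 _]]. eauto.
      + destruct (FP X FX) as [_ [X2 _]]. eauto.
    - intros p p' y [X [FX Xt]] [Y [FY Yt]]. destruct (Ftot X Y FX FY) as [XY|YX].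
      + destruct (FP Y FY) as [_ [_ [Y3 _]]]. eauto.
      + destruct (FP X FX) as [_ [_ [X3 _]]]. eauto.
    - intros x n [y [X [FX Xt]]]. destruct (FP X FX) as [_ [_ [_ X4]]].
      destruct (X4 x n (ex_intro _ y Xt)) as [y' Hy']. exists y', X. auto. }
  set (X := Dom G).
  assert (NoSeq : ~ ninj (fun x => A x /\ ~ X x)).
  { intros [k [kA kI]].
    set (G' := fun t => G t \/ exists i n, t = ((k i, n), k (to_nat (i, n)))).
    assert (Gk : forall i, Dom G' (k i)). { intro i. exists (k (to_nat (i, O))). right. exists i, O. reflexivity. }
    assert (Gsub : forall t, G t -> G' t) by (intros; left; auto).
    assert (DG : forall x, Dom G x -> Dom G' x) by (intros x [y Hy]; exists y; left; auto).
    assert (good G').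
    { split; [|split; [|split]].
      - intros x n y [Gt|[i [n' E]]].
        + destruct (G1 _ _ _ Gt) as [? [? ?]]. auto.
        + injection E as -> -> ->. split. apply kA. split; apply Gk.
      - intros [x0 m0] y y' [Gt|[i [n E]]] [Gt'|[i' [n' E']]];
          try (injection E as ? ?); try (injection E' as ? ?); subst.
        + eauto.
        + destruct (G1 _ _ _ Gt) as [_ [_ D]]. exfalso. apply (kA i'). exact D.
        + destruct (G1 _ _ _ Gt') as [_ [_ D]]. exfalso. apply (kA i). exact D.
        + match goal with Hk : k ?a = k ?b |- _ => apply kI in Hk; subst; reflexivity end.
      - intros [x0 m0] [x1 m1] y [Gt|[i [n E]]] [Gt'|[i' [n' E']]];
          try (injection E as ? ?); try (injection E' as ? ?); subst.
        + eauto.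
        + destruct (G1 _ _ _ Gt) as [_ [D _]]. exfalso. apply (kA (to_nat (i', n'))). exact D.
        + destruct (G1 _ _ _ Gt') as [_ [D _]]. exfalso. apply (kA (to_nat (i, n))). exact D.
        + match goal with Hk : k (to_nat _) = k (to_nat _) |- _ =>
            apply kI, (f_equal of_nat) in Hk; rewrite !cancel_of_to in Hk; injection Hk as -> ->; reflexivity end.
      - intros x n [y [Gt|[i [n' E]]]].
        + destruct (G4 x n (ex_intro _ y Gt)) as [y' Hy']. exists y'. left; auto.
        + injection E as -> _ _. exists (k (to_nat (i, n))). right. exists i, n. reflexivity. }
    assert (G' ((k O, O), k (to_nat (O, O)))) by (right; exists O, O; reflexivity).
    pose proof (Gmax G' Gsub H _ H0). apply (kA O). exists (k (to_nat (O, O))). exact H1. }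
  destruct (dichotomy T (h O) (fun x => A x /\ ~ X x)) as [[lB FB]|NI]; [|contradiction].
  assert (X0 : exists x0, X x0).
  { apply NNPP. intro N. apply NoSeq. exists h. split; auto. intro i. split; auto. intro Xi. apply N. eauto. }
  destruct X0 as [x0 Xx0].
  destruct (finlist_idx T x0 _ _ FB) as [idx Hidx].
  assert (Gch : forall p, exists y, X (fst p) -> G (p, y)).
  { intros [x n]. destruct (classic (X x)) as [Xx|Xx].
    - destruct (G4 x n Xx) as [y Hy]. exists y. auto.
    - exists x0. simpl. intro; contradiction. }
  destruct (fun_choice _ Gch) as [g Hg].
  assert (gA : forall p, X (fst p) -> A (g p)).
  { intros p Xp. specialize (Hg p Xp). destruct p as [x n]. destruct (G1 _ _ _ Hg) as [_ [[z Hz] _]].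
    destruct (G1 _ _ _ Hz) as [Ay _]. exact Ay. }
  exists (fun p => if excluded_middle_informative (X (fst p)) then g (fst p, 2 * snd p)%nat
            else g (x0, S (2 * to_nat (idx (fst p), snd p)))).
  split.
  - intros [x n] Ax. simpl. destruct (excluded_middle_informative (X x)); apply gA; auto.
  - intros [x n] [x' n'] Ax Ax'. cbn [fst snd] in *.
    destruct (excluded_middle_informative (X x)) as [Xx|Xx];
    destruct (excluded_middle_informative (X x')) as [Xx'|Xx']; intro E.
    + pose proof (Hg (x, 2 * n)%nat Xx). pose proof (Hg (x', 2 * n')%nat Xx'). rewrite E in H.
      pose proof (G3 _ _ _ H H0). injection H1 as -> E2. f_equal. lia.
    + pose proof (Hg (x, 2 * n)%nat Xx). pose proof (Hg (x0, S (2 * to_nat (idx x', n'))) Xx0). rewrite E in H.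
      pose proof (G3 _ _ _ H H0). injection H1 as _ E2. lia.
    + pose proof (Hg (x0, S (2 * to_nat (idx x, n))) Xx0). pose proof (Hg (x', 2 * n')%nat Xx'). rewrite E in H.
      pose proof (G3 _ _ _ H H0). injection H1 as _ E2. lia.
    + pose proof (Hg (x0, S (2 * to_nat (idx x, n))) Xx0). pose proof (Hg (x0, S (2 * to_nat (idx x', n'))) Xx0).
      rewrite E in H. pose proof (G3 _ _ _ H H0). injection H1 as E2.
      assert (to_nat (idx x, n) = to_nat (idx x', n')) by lia.
      apply (f_equal of_nat) in H1. rewrite !cancel_of_to in H1. injection H1 as E3 ->.
      destruct (Hidx x (conj Ax Xx)) as [_ Ex]. destruct (Hidx x' (conj Ax' Xx')) as [_ Ex'].
      assert (x = x') by (rewrite <- Ex, <- Ex', E3; reflexivity). subst. reflexivity.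
Qed.
End Absorb.

Ltac cring := apply Ceq; simpl; ring.

Definition Copp (a : Cplx) := mkC (- Re a) (- Im a).
Definition Cinv (a : Cplx) := mkC (Re a / Cabs2 a) (- Im a / Cabs2 a).

Lemma Cabs2_pos a : a <> C0 -> 0 < Cabs2 a.
Proof.
  intro N. unfold Cabs2. destruct (Req_dec (Re a) 0); destruct (Req_dec (Im a) 0).
  - exfalso; apply N; apply Ceq; simpl; auto.
  - nra. - nra. - nra.
Qed.

Lemma Cmul_inv a : a <> C0 -> Cmul a (Cinv a) = Defs.C1.
Proof.
  intro N. pose proof (Cabs2_pos a N). unfold Cinv, Cabs2 in *. apply Ceq; simpl; field; intro Z; rewrite Z in H; lra.
Qed.

Lemma csum_ext (f g : nat -> Cplx) m : (forall i, (i < m)%nat -> f i = g i) -> csum f m = csum g m.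
Proof. induction m; intros E; simpl; auto. rewrite IHm by (intros; apply E; lia). rewrite E by lia. reflexivity. Qed.

Lemma csum_lin (f g : nat -> Cplx) c m :
  csum (fun i => Cadd (f i) (Cmul (g i) c)) m = Cadd (csum f m) (Cmul (csum g m) c).
Proof. induction m; simpl. cring. rewrite IHm. cring. Qed.

Lemma csum_zero (f : nat -> Cplx) m : (forall i, (i < m)%nat -> f i = C0) -> csum f m = C0.
Proof. induction m; intros E; simpl; auto. rewrite IHm by (intros; apply E; lia). rewrite E by lia. cring. Qed.

Definition skip (i0 i : nat) := if Nat.ltb i i0 then i else S i.

Lemma csum_skip (f : nat -> Cplx) m i0 : (i0 <= m)%nat ->
  csum f (S m) = Cadd (csum (fun i => f (skip i0 i)) m) (f i0).
Proof.
  revert i0. induction m; intros i0 Hi.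
  - assert (i0 = O) by lia. subst. simpl. reflexivity.
  - destruct (Nat.eq_dec i0 (S m)) as [->|Ne].
    + change (csum f (S (S m))) with (Cadd (csum f (S m)) (f (S m))). f_equal.
      apply csum_ext. intros i Hi'. unfold skip. destruct (Nat.ltb_spec i (S m)); [reflexivity|lia].
    + change (csum f (S (S m))) with (Cadd (csum f (S m)) (f (S m))).
      rewrite (IHm i0) by lia. simpl. replace (skip i0 m) with (S m) by (unfold skip; destruct (Nat.ltb_spec m i0); [lia|reflexivity]). cring.
Qed.

Lemma kernel n : forall m (M : nat -> nat -> Cplx), (n < m)%nat ->
  exists a : nat -> Cplx, (exists i, (i < m)%nat /\ a i <> C0) /\
    forall j, (j < n)%nat -> csum (fun i => Cmul (a i) (M i j)) m = C0.
Proof.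
  induction n; intros m M Hnm.
  - exists (fun _ => Defs.C1). split. exists O. split. lia. intro E. apply (f_equal Re) in E. simpl in E. lra.
    intros; lia.
  - destruct (Classical_Prop.classic (exists i0, (i0 < m)%nat /\ M i0 n <> C0)) as [[i0 [Hi0 Np]]|Nall].
    + destruct m as [|m']; [lia|].
      set (p := M i0 n). set (pinv := Cinv p).
      set (M' := fun i j => Cadd (M (skip i0 i) j) (Cmul (M (skip i0 i) n) (Copp (Cmul pinv (M i0 j))))).
      destruct (IHn m' M' ltac:(lia)) as [b [[i1 [Hi1 Nb]] Eb]].
      set (Sn := csum (fun i => Cmul (b i) (M (skip i0 i) n)) m').
      set (a := fun i => if Nat.eqb i i0 then Copp (Cmul Sn pinv) else b (if Nat.ltb i i0 then i else pred i)).
      assert (Ar : forall i, a (skip i0 i) = b i).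
      { intro i. unfold a, skip. destruct (Nat.ltb_spec i i0).
        - destruct (Nat.eqb_spec i i0); [lia|]. destruct (Nat.ltb_spec i i0); [reflexivity|lia].
        - destruct (Nat.eqb_spec (S i) i0); [lia|]. destruct (Nat.ltb_spec (S i) i0); [lia|reflexivity]. }
      assert (A0 : a i0 = Copp (Cmul Sn pinv)). { unfold a. rewrite Nat.eqb_refl. reflexivity. }
      exists a. split.
      * exists (skip i0 i1). split. unfold skip; destruct (Nat.ltb_spec i1 i0); lia. rewrite Ar. auto.
      * intros j Hj. rewrite (csum_skip _ m' i0) by lia.
        rewrite (csum_ext _ (fun i => Cmul (b i) (M (skip i0 i) j))) by (intros; rewrite Ar; reflexivity).
        rewrite A0.
        destruct (Nat.eq_dec j n) as [->|Nj].
        -- fold Sn. fold p. pose proof (Cmul_inv p Np) as Hp. fold pinv in Hp.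
           replace (Cmul (Copp (Cmul Sn pinv)) p) with (Copp (Cmul Sn (Cmul p pinv))) by cring.
           rewrite Hp. cring.
        -- specialize (Eb j ltac:(lia)). unfold M' in Eb.
           rewrite (csum_ext _ (fun i => Cadd (Cmul (b i) (M (skip i0 i) j)) (Cmul (Cmul (b i) (M (skip i0 i) n)) (Copp (Cmul pinv (M i0 j)))))) in Eb by (intros; cring).
           rewrite csum_lin in Eb. fold Sn in Eb. rewrite <- Eb. unfold Copp. cring.
    + destruct (IHn m M ltac:(lia)) as [a [Na Ea]]. exists a. split; auto.
      intros j Hj. destruct (Nat.eq_dec j n) as [->|Nj].
      * apply csum_zero. intros i Hi. assert (M i n = C0) by (apply Classical_Prop.NNPP; intro; apply Nall; eauto).
        rewrite H. cring.
      * apply Ea. lia.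
Qed.

Section Dim.
Variables H K : Hilbert.
Variable T : H -> K.
Hypothesis Tadd : forall x y, T (hadd x y) = hadd (T x) (T y).
Hypothesis Tscal : forall a x, T (hscal a x) = hscal a (T x).
Hypothesis Tb : exists M, forall x, norm (T x) <= M * norm x.
Hypothesis Tinj : forall x y, T x = T y -> x = y.
Variables (V : H -> Prop) (W : K -> Prop).
Hypothesis TVW : forall x, V x -> W (T x).
Hypothesis Wsub : subspace W.
Variables (SV : H -> Prop) (SW : K -> Prop).
Hypothesis HSV : orthonormal_basis V SV.
Hypothesis HSW : orthonormal_basis W SW.
Hypothesis ZK : ZornP ((K * nat) * K).

Lemma F2 v : W v -> (forall b, SW b -> hinner v b = C0) -> v = hzero.
Proof.
  intros Wv O. destruct HSW as [_ [_ D]]. apply (orth_closure_zero _ SW); auto.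
Qed.

Lemma F3 (e : nat -> H) m : (forall i, (i < m)%nat -> SV (e i)) ->
  (forall i j, (i < m)%nat -> (j < m)%nat -> e i = e j -> i = j) -> orthofam e m.
Proof.
  intros S I i j Hi Hj. destruct HSV as [_ [[O1 O2] _]].
  destruct (Nat.eq_dec i j) as [->|N]. apply O1; auto. apply O2; auto.
Qed.

Lemma SV_nz e : SV e -> e <> hzero.
Proof. intros S ->. destruct HSV as [_ [[O1 _] _]]. pose proof (O1 _ S). rewrite hinner_0l in H0. apply C1_neq_C0; auto. Qed.

Lemma T_zero' : T hzero = hzero. Proof. apply lin_zero; auto. Qed.

Lemma bound_fin lW : finlist SW lW -> forall (e : nat -> H) m, (forall i, (i < m)%nat -> SV (e i)) ->
  (forall i j, (i < m)%nat -> (j < m)%nat -> e i = e j -> i = j) -> (m <= length lW)%nat.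
Proof.
  intros [NDW HW] e m Se Ie. destruct (le_lt_dec m (length lW)) as [L|L]; auto. exfalso.
  set (n := length lW) in *. set (b := fun j => nth j lW hzero).
  destruct (kernel n m (fun i j => hinner (T (e i)) (b j)) L) as [a [[i0 [Hi0 Na]] Ea]].
  set (v := vsum a e m).
  assert (Tv : T v = hzero).
  { apply F2.
    - unfold v. rewrite lin_vsum by auto. apply vsum_in; auto. intros. apply TVW. destruct HSV as [S1 _]. auto.
    - intros s Ss. apply HW in Ss. apply In_nth with (d := hzero) in Ss. destruct Ss as [j [Hj <-]].
      unfold v. rewrite lin_vsum by auto. rewrite inner_vsum_l. apply Ea. auto. }
  assert (v = hzero) by (apply Tinj; rewrite Tv, T_zero'; reflexivity).
  pose proof (inner_vsum_e _ a e m m i0 (F3 e m Se Ie) (le_n _) Hi0). fold v in H1. rewrite H0, hinner_0l in H1.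
  destruct (Nat.ltb_spec i0 m); [|lia]. auto.
Qed.

Lemma inj_fin : (exists lW, finlist SW lW) -> inj_le SV SW.
Proof.
  intros [lW FW].
  destruct (dichotomy H hzero SV) as [[lV FV]|[h [hS hI]]].
  - assert (Lm : (length lV <= length lW)%nat).
    { destruct FV as [NDV HV]. apply (bound_fin lW FW (fun i => nth i lV hzero)).
      intros i Hi. apply HV, nth_In; auto.
      intros i j Hi Hj E. eapply NoDup_nth; eauto. }
    destruct (finlist_idx H hzero SV lV FV) as [idx Hidx].
    destruct FW as [NDW HW].
    exists (fun x => nth (idx x) lW hzero). split.
    + intros x Sx. apply HW, nth_In. destruct (Hidx x Sx). lia.
    + intros x y Sx Sy E. destruct (Hidx x Sx) as [Lx Ex]. destruct (Hidx y Sy) as [Ly Ey].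
      assert (idx x = idx y) by (eapply NoDup_nth; eauto; lia). congruence.
  - exfalso. pose proof (bound_fin lW FW h (S (length lW)) (fun i _ => hS i) (fun i j _ _ E => hI i j E)). lia.
Qed.

Lemma fiber_fin (b : K) (k : nat) :
  exists l, finlist (fun e => SV e /\ / (INR k + 1) <= Cabs2 (hinner (T e) b)) l.
Proof.
  destruct (dichotomy H hzero (fun e => SV e /\ / (INR k + 1) <= Cabs2 (hinner (T e) b))) as [F|[h [hS hI]]]; auto.
  exfalso. destruct (bounded_nonneg _ _ T Tb) as [M [M0 HM]].
  set (C := (M * norm b) * (M * norm b)). set (d := / (INR k + 1)).
  assert (dpos : 0 < d) by (unfold d; apply Rinv_0_lt_compat; pose proof (pos_INR k); lra).
  destruct (INR_unbounded (C / d)) as [m Hm].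
  pose proof (bessel_functional T M b h m Tadd Tscal M0 HM) as Bs.
  assert (O : orthofam h m) by (apply F3; [intros; apply hS | auto]).
  specialize (Bs O). fold C in Bs.
  assert (Lo : INR m * d <= rsum (fun i => Cabs2 (hinner (T (h i)) b)) m) by (apply rsum_ge; intros; apply hS).
  assert (C / d * d = C) by (field; lra).
  assert (C / d * d < INR m * d) by (apply Rmult_lt_compat_r; lra). lra.
Qed.

Lemma exists_b e : SV e -> exists b, SW b /\ hinner (T e) b <> C0.
Proof.
  intro Se. apply NNPP. intro N. apply (SV_nz e Se). apply Tinj. rewrite T_zero'.
  apply F2. apply TVW. destruct HSV as [S1 _]; auto.
  intros b Sb. apply NNPP. intro Nb. apply N. eauto.
Qed.

Lemma inj_inf : ninj SW -> inj_le SV SW.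
Proof.
  intro NI. apply inj_le_trans with (B := fun p : K * nat => SW (fst p)); [|apply absorb; auto].
  assert (Cb : forall b, exists c : H -> nat, forall e e', SV e -> SV e' -> hinner (T e) b <> C0 -> hinner (T e') b <> C0 -> c e = c e' -> e = e').
  { intro b. destruct (countable_union hzero (fun e => SV e /\ hinner (T e) b <> C0)
        (fun k e => SV e /\ / (INR k + 1) <= Cabs2 (hinner (T e) b)) (fiber_fin b)) as [c [_ Hc]].
    - intros e [Se Ne]. pose proof (Cabs2_pos _ Ne). destruct (archimed_cor1 _ H0) as [k [Hk Hk0]].
      exists k. split; auto. left. eapply Rle_lt_trans; [|exact Hk]. apply Rinv_le_contravar. apply lt_0_INR; lia. lra.
    - exists c. intros. apply Hc; auto. }
  destruct (fun_choice _ Cb) as [c Hc].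
  assert (Bch : forall e, exists b, SV e -> SW b /\ hinner (T e) b <> C0).
  { intro e. destruct (classic (SV e)) as [Se|Se]. destruct (exists_b e Se) as [b Hb]. exists b; auto.
    exists hzero. intro; contradiction. }
  destruct (fun_choice _ Bch) as [bs Hbs].
  exists (fun e => (bs e, c (bs e) e)). split.
  - intros e Se. apply Hbs, Se.
  - intros e e' Se Se' E. injection E as E1 E2. rewrite <- E1 in E2.
    destruct (Hbs e Se) as [_ N1]. destruct (Hbs e' Se') as [_ N2]. rewrite <- E1 in N2.
    apply (Hc (bs e)); auto.
Qed.

Lemma inj_SV_SW : inj_le SV SW.
Proof.
  destruct (dichotomy K hzero SW) as [F|N]. apply inj_fin; auto. apply inj_inf; auto.
Qed.
End Dim.

Lemma inj_le_sig {T U} (A : T -> Prop) (B : U -> Prop) : inj_le A B ->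
  exists f : {x : T | A x} -> {y : U | B y}, forall a b, f a = f b -> a = b.
Proof.
  intros [f [f1 f2]]. exists (fun x => exist _ (f (proj1_sig x)) (f1 _ (proj2_sig x))).
  intros [a Ha] [b Hb] E. simpl in E. apply (f_equal (@proj1_sig _ _)) in E. simpl in E.
  apply f2 in E; auto. subst. f_equal. apply proof_irrelevance.
Qed.

Lemma final_aux (Z : forall T, ZornP T) (H K : Hilbert) (A : Op H H) (B : Op K K) (T : H -> K)
  (hAc : closed_op A) (hAd : densely_defined A)
  (hBc : closed_op B) (hBd : densely_defined B)
  (hT : quasi_similar_via T A B) :
  ((forall l, point_spectrum A l -> point_spectrum B l) /\
   (forall l, point_spectrum A l -> multiplicity_le A B l)) /\
  (forall l, residual_spectrum B l -> residual_spectrum A l) /\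
  ((forall y, image T (dom A) y <-> dom B y) ->
     forall l, point_spectrum B l <-> point_spectrum A l) /\
  ((exists M, forall x, norm x <= M * norm (T x)) ->
     core (image T (dom A)) B ->
     forall l, point_spectrum B l -> spectrum A l).
Proof.
  split; [split|split; [|split]].
  - intro l. apply (part_i_point H K A B T hT).
  - intros l _. unfold multiplicity_le, dim_le.
    destruct (onb_exists H (Z _) (eigenspace A l) (eig_subspace _ _ l) (eig_closed _ _ l hAc)) as [SV HSV].
    destruct (onb_exists K (Z _) (eigenspace B l) (eig_subspace _ _ l) (eig_closed _ _ l hBc)) as [SW HSW].
    exists SV, SW. split; auto. split; auto.
    destruct hT as [[[Tadd [Tscal Tb]] Tint] [Tinj _]].
    apply inj_le_sig. apply (inj_SV_SW H K T Tadd Tscal Tb Tinj (eigenspace A l) (eigenspace B l)); auto.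
    + intros x [Dx Ex]. destruct (Tint x Dx) as [D E]. split; auto. rewrite E, Ex, Tscal. reflexivity.
    + apply eig_subspace.
  - intro l. apply (part_ii H K A B T hT).
  - apply (part_iii H K A B T hT).
  - apply (part_iv H K A B T hT).
Qed.

From mathcomp Require Import all_boot classical_sets boolp.
Section ZornSec.
Local Open Scope classical_set_scope.

Lemma zorn_sets (T : Type) (P : (T -> Prop) -> Prop) :
  (forall F : (T -> Prop) -> Prop, (forall X, F X -> P X) ->
     (forall X Y, F X -> F Y -> (forall t, X t -> Y t) \/ (forall t, Y t -> X t)) ->
     P (fun t => exists X, F X /\ X t)) ->
  exists A, P A /\ forall B, (forall t, A t -> B t) -> P B -> forall t, B t -> A t.
Proof.
  move=> Hch.
  have [F FP Ftot|A [PA Amax]] := @Zorn_bigcup T P.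
  - have -> : (\bigcup_(X in F) X) = (fun t => exists X, F X /\ X t).
      by apply/funext => t; apply/propext; split => [[X FX Xt]|[X [FX Xt]]]; [exists X|exists X].
    apply: Hch => [X FX|X Y FX FY]; first exact: FP.
    by have [XY|YX] := Ftot X Y FX FY; [left|right].
  - exists A; split => // B AB PB.
    apply: contrapT => nBA. apply: (Amax B) => //.
Qed.

End ZornSec.
Import Defs.
Open Scope R_scope.

Theorem proposition3p10 (H K : Hilbert) (A : Op H H) (B : Op K K) (T : H -> K)
  (hAc : closed_op A) (hAd : densely_defined A)
  (hBc : closed_op B) (hBd : densely_defined B)
  (hT : quasi_similar_via T A B) :
  ((forall l, point_spectrum A l -> point_spectrum B l) /\
   (forall l, point_spectrum A l -> multiplicity_le A B l)) /\
  (forall l, residual_spectrum B l -> residual_spectrum A l) /\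
  ((forall y, image T (dom A) y <-> dom B y) ->
     forall l, point_spectrum B l <-> point_spectrum A l) /\
  ((exists M, forall x, norm x <= M * norm (T x)) ->
     core (image T (dom A)) B ->
     forall l, point_spectrum B l -> spectrum A l).
Proof.
  exact (final_aux (fun T0 => @zorn_sets T0) H K A B T hAc hAd hBc hBd hT).
Qed.
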